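(* Let $A,B\subseteq\omega$ with $B$ infinite. If $A$ is c.e. relative to every infinite subset of $B$, then there is an infinite $C\subseteq B$ and a single relative c.e. operator $\Theta$ with $\Theta(S)=A$ for every infinite $S\subseteq C$.
   Context: A relative c.e. operator is a c.e. set $\Theta$ of pairs $(\sigma,x)\in 2^{<\omega}\times\omega$, with $\Theta(X)$ the set of $x$ such that $(\sigma,x)\in\Theta$ for some initial segment $\sigma$ of the characteristic function of $X$. *)

(* Defs.v *)
From mathcomp Require Import ssreflect ssrfun ssrbool eqtype ssrnat seq.
Set Implicit Arguments. Unset Strict Implicit. Unset Printing Implicit Defensive.

Definition nset := nat -> Prop.

Definition subset (S T : nset) : Prop := forall x, S x -> T x.

Definition infinite (S : nset) : Prop := forall n, exists m, n <= m /\ S m.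

Inductive prog : Type :=
| PZero : prog
| PSucc : prog
| PProj : nat -> prog
| POracle : prog
| PComp : prog -> list prog -> prog
| PPrec : prog -> prog -> prog
| PMu : prog -> prog.

Inductive eval (X : nset) : prog -> seq nat -> nat -> Prop :=
| eZero v : eval X PZero v 0
| eSucc v : eval X PSucc v (head 0 v).+1
| eProj i v : eval X (PProj i) v (nth 0 v i)
| eOracleIn x v : X x -> eval X POracle (x :: v) 1
| eOracleOut x v : ~ X x -> eval X POracle (x :: v) 0
| eComp f gs v ws y : evals X gs v ws -> eval X f ws y -> eval X (PComp f gs) v y
| ePrec0 f g v y : eval X f v y -> eval X (PPrec f g) (0 :: v) y
| ePrecS f g n v z y :
    eval X (PPrec f g) (n :: v) z -> eval X g (n :: z :: v) y ->
    eval X (PPrec f g) (n.+1 :: v) y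
| eMu f v n :
    eval X f (n :: v) 0 ->
    (forall m, m < n -> exists k, eval X f (m :: v) k.+1) ->
    eval X (PMu f) v n
with evals (X : nset) : list prog -> seq nat -> seq nat -> Prop :=
| esNil v : evals X nil v [::]
| esCons g gs v w ws : eval X g v w -> evals X gs v ws -> evals X (g :: gs) v (w :: ws).

Definition ce_in (X A : nset) : Prop :=
  exists e : prog, forall x, A x <-> exists y, eval X e [:: x] y.

Definition empty_set : nset := fun _ => False.
Definition ce (A : nset) : Prop := ce_in empty_set A.

Definition cpair (a b : nat) : nat := Nat.div ((a + b) * (a + b).+1) 2 + b.
Fixpoint code_str (s : seq bool) : nat :=
  match s with
  | [::] => 0
  | b :: s' => (code_str s').*2 + 1 + b
  end.

Definition operator := seq bool * nat -> Prop.

Definition rel_ce_operator (Theta : operator) : Prop :=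
  ce (fun n => exists s x, n = cpair (code_str s) x /\ Theta (s, x)).

Definition init_seg (s : seq bool) (X : nset) : Prop :=
  forall i, i < size s -> (nth false s i = true <-> X i).

Definition apply_op (Theta : operator) (X : nset) : nset :=
  fun x => exists s, init_seg s X /\ Theta (s, x).

(* Main.v *)
From Stdlib Require Import ClassicalEpsilon Classical List Arith.
Require Import Defs.
From mathcomp Require Import ssreflect ssrfun ssrbool eqtype ssrnat seq choice.
From mathcomp Require Import zify.
Set Warnings "-notation-overridden".
Unset Printing Implicit Defensive.

Definition bP (P : Prop) : bool := if excluded_middle_informative P then true else false.
Lemma bPP (P : Prop) : reflect P (bP P).
Proof. rewrite /bP; case: excluded_middle_informative => H; by constructor. Qed.

Lemma ex_min (P : nat -> Prop) : (exists n, P n) -> exists n, P n /\ forall m, P m -> n <= m.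
Proof.
move=> [n Hn].
have H : exists n, bP (P n) by exists n; apply/bPP.
case: (ex_minnP H) => m /bPP Hm Hmin; exists m; split => // k Hk; apply: Hmin; exact/bPP.
Qed.

Definition lmax (L : seq nat) := foldr maxn 0 L.
Lemma lmax_ge L i : i \in L -> i <= lmax L.
Proof.
elim: L => //= a L IH; rewrite in_cons => /orP [/eqP ->|H]; first exact: leq_maxl.
exact: leq_trans (IH H) (leq_maxr _ _).
Qed.

Lemma infinite_above (X : nset) b : infinite X -> infinite (fun i => X i /\ b <= i).
Proof. move=> H n; have [m [Hm Xm]] := H (maxn n b); exists m; rewrite geq_max in Hm.
by case/andP: Hm => -> ->. Qed.

Lemma infinite_sub_fin (S Z : nset) (L : seq nat) : infinite S ->
  (forall i, S i -> i \in L \/ Z i) -> infinite (fun i => S i /\ Z i).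
Proof.
move=> HS H n. have [m [Hm Sm]] := HS (maxn n (lmax L).+1).
rewrite geq_max in Hm; case/andP: Hm => Hm1 Hm2.
exists m; split => //; split => //.
case: (H _ Sm) => // HL. have := lmax_ge _ _ HL. by rewrite leqNgt Hm2.
Qed.

Lemma infinite_mono (S T : nset) : subset S T -> infinite S -> infinite T.
Proof. move=> H HS n; have [m [? ?]] := HS n; exists m; split; auto. Qed.

Definition tail (c : nat -> nat) k : nset := fun i => exists j, k <= j /\ i = c j.
Definition range (c : nat -> nat) : nset := fun i => exists j, i = c j.

Section Incr.
Variable c : nat -> nat.
Hypothesis Hc : forall j, c j < c j.+1.
Lemma incr_lt i j : i < j -> c i < c j.
Proof.
elim: j => // j IH; rewrite ltnS leq_eqVlt => /orP [/eqP ->|H]; first exact: Hc.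
exact: ltn_trans (IH H) (Hc j).
Qed.
Lemma incr_le i j : i <= j -> c i <= c j.
Proof. rewrite leq_eqVlt => /orP [/eqP ->|H] //; exact: ltnW (incr_lt _ _ H). Qed.
Lemma incr_ge j : j <= c j.
Proof. elim: j => // j IH; exact: leq_ltn_trans IH (Hc j). Qed.
Lemma incr_inv i j : c i <= c j -> i <= j.
Proof. move=> H; rewrite leqNgt; apply/negP => /(incr_lt _ _); by rewrite ltnNge H. Qed.
Lemma incr_inj i j : c i = c j -> i = j.
Proof. by move=> H; apply/eqP; rewrite eqn_leq (incr_inv _ _ (eq_leq H)) (incr_inv _ _ (eq_leq (esym H))). Qed.
Lemma tail_inf k : infinite (tail c k).
Proof. move=> n; exists (c (maxn n k)); split; last by exists (maxn n k); rewrite leq_maxr.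
exact: leq_trans (leq_maxl n k) (incr_ge _). Qed.
Lemma mem_pre i k : (i \in mkseq c k) <-> exists j, j < k /\ i = c j.
Proof.
split.
- move/mapP => [j]; rewrite mem_iota add0n => /andP [_ Hj] ->; by exists j.
- move=> [j [Hj ->]]; apply/mapP; exists j => //; by rewrite mem_iota add0n.
Qed.
Lemma range_split k i : range c i -> i \in mkseq c k \/ tail c k i.
Proof. move=> [j ->]; case: (ltnP j k) => H; [left; apply/mem_pre; by exists j|right; by exists j]. Qed.
Lemma tail_above k i j : tail c k i -> j \in mkseq c k -> j < i.
Proof. move=> [j1 [H1 ->]] /mem_pre [j2 [H2 ->]]; apply: incr_lt; exact: leq_trans H2 H1. Qed.
End Incr.

Section Fusion.
Variable R : seq nat -> nset -> Prop.
Hypothesis Rmono : forall p Y Y', R p Y -> subset Y' Y -> infinite Y' -> R p Y'.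
Hypothesis Rdense : forall p Y, infinite Y -> exists Y', subset Y' Y /\ infinite Y' /\ R p Y'.
Variable X : nset.
Hypothesis HX : infinite X.

Definition chooseY p (Y : nset) : nset :=
  epsilon (inhabits Y) (fun Y' => subset Y' Y /\ infinite Y' /\ R p Y').
Definition choosez (Y : nset) : nat := epsilon (inhabits 0) (fun z => Y z).
Definition stepS (st : seq nat * nset) : seq nat * nset :=
  let Y' := chooseY st.1 st.2 in let z := choosez Y' in (rcons st.1 z, fun i => Y' i /\ z < i).
Fixpoint stS k := if k is k'.+1 then stepS (stS k') else ([::], X).
Definition Yp k := chooseY (stS k).1 (stS k).2.
Definition cf j := choosez (Yp j).

Lemma chooseY_spec p Y : infinite Y -> subset (chooseY p Y) Y /\ infinite (chooseY p Y) /\ R p (chooseY p Y).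
Proof. move=> H; rewrite /chooseY; apply epsilon_spec; exact: Rdense. Qed.
Lemma choosez_spec (Y : nset) : infinite Y -> Y (choosez Y).
Proof. move=> H; rewrite /choosez; apply epsilon_spec; have [m [_ Hm]] := H 0; by exists m. Qed.

Lemma stS_inf k : infinite (stS k).2 /\ subset (stS k).2 X.
Proof.
elim: k => [|k [IH1 IH2]] /=; first by split.
have [H1 [H2 H3]] := chooseY_spec (stS k).1 _ IH1.
split.
- move=> n; have [m [Hm [Ym Hz]]] := infinite_above _ (choosez (chooseY (stS k).1 (stS k).2)).+1 H2 n.
  by exists m.
- move=> i [Hi _]; exact: IH2 (H1 _ Hi).
Qed.

Lemma Yp_spec k : subset (Yp k) (stS k).2 /\ infinite (Yp k) /\ R (stS k).1 (Yp k).
Proof. exact: chooseY_spec _ _ (stS_inf k).1. Qed.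
Lemma cf_in k : Yp k (cf k).
Proof. exact: choosez_spec _ (Yp_spec k).2.1. Qed.
Lemma stS_S k i : (stS k.+1).2 i <-> Yp k i /\ cf k < i.
Proof. by []. Qed.
Lemma stS_1 k : (stS k).1 = mkseq cf k.
Proof. elim: k => // k IH; by rewrite mkseqS -IH. Qed.
Lemma cf_incr j : cf j < cf j.+1.
Proof. have [H _] := Yp_spec j.+1; have [_ ?] := H _ (cf_in j.+1); by []. Qed.
Lemma Yp_dec k d : subset (Yp (k + d)) (Yp k).
Proof.
elim: d => [|d IH]; first by rewrite addn0.
move=> i Hi; apply: IH; rewrite addnS in Hi; have [H _] := Yp_spec (k + d).+1.
by case: (H _ Hi).
Qed.
Lemma cf_X j : X (cf j).
Proof. have [H _] := Yp_spec j; exact: (stS_inf j).2 _ (H _ (cf_in j)). Qed.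
Lemma tail_Yp k : subset (tail cf k) (Yp k).
Proof. move=> i [j [Hj ->]]; have := Yp_dec k (j - k); rewrite subnKC //; apply; exact: cf_in. Qed.

Lemma fusion : exists c : nat -> nat, (forall j, c j < c j.+1) /\ (forall j, X (c j)) /\
  (forall k, R (mkseq c k) (tail c k)).
Proof.
exists cf; split; first exact: cf_incr; split; first exact: cf_X.
move=> k; have [_ [_ H]] := Yp_spec k; rewrite stS_1 in H.
exact: (Rmono _ _ _ H (tail_Yp k) (tail_inf _ cf_incr k)).
Qed.
End Fusion.

Fixpoint subs (p : seq nat) : seq (seq nat) :=
  if p is a :: p' then subs p' ++ map (cons a) (subs p') else [:: [::]].

Lemma subs_complete (p s : seq nat) : {subset s <= p} -> exists2 Q, Q \in subs p & s =i Q.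
Proof.
elim: p s => [|a p IH] s Hs /=.
- exists [::]; first by rewrite inE.
  move=> i; rewrite in_nil; apply/negP => Hi; by have := Hs _ Hi.
- have Hs' : {subset [seq i <- s | i != a] <= p}.
    move=> i; rewrite mem_filter => /andP [Hia Hi]; move: (Hs _ Hi); rewrite in_cons.
    by rewrite (negbTE Hia).
  have [Q HQ HsQ] := IH _ Hs'.
  case Ha: (a \in s).
  + exists (a :: Q); first by rewrite mem_cat; apply/orP; right; apply/mapP; exists Q.
    move=> i; rewrite in_cons -HsQ mem_filter.
    case: (eqVneq i a) => [->|Hia] //=.
  + exists Q; first by rewrite mem_cat HQ.
    move=> i; rewrite -HsQ mem_filter; case: (eqVneq i a) => [->|Hia] //=; by rewrite Ha.
Qed.

Lemma subs_sound (p Q : seq nat) : Q \in subs p -> {subset Q <= p}.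
Proof.
elim: p Q => [|a p IH] Q /=; first by rewrite inE => /eqP ->.
rewrite mem_cat => /orP [H|/mapP [Q' H ->]] i.
- move=> Hi; rewrite in_cons (IH _ H _ Hi); by rewrite orbT.
- rewrite !in_cons => /orP [->//|Hi]; by rewrite (IH _ H _ Hi) orbT.
Qed.

Lemma list_bound (T : eqType) (L : seq T) (P : T -> nat -> Prop) :
  (forall Q b b', b <= b' -> P Q b -> P Q b') ->
  (forall Q, Q \in L -> exists b, P Q b) -> exists b, forall Q, Q \in L -> P Q b.
Proof.
move=> Hm; elim: L => [|a L IH] H; first by exists 0.
have [b1 H1] := H a (mem_head _ _).
have [b2 H2] := IH (fun Q HQ => H Q (mem_behead (s := a :: L) HQ)).
exists (maxn b1 b2) => Q; rewrite in_cons => /orP [/eqP ->|HQ].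
- apply: Hm H1; exact: leq_maxl.
- apply: Hm (H2 _ HQ); exact: leq_maxr.
Qed.

Section NW.
Variable O : nset -> Prop.
Definition openO := forall S, O S -> exists n, forall T, (forall i, i < n -> (S i <-> T i)) -> O T.
Hypothesis Hopen : openO.

Lemma O_ext S T : O S -> (forall i, S i <-> T i) -> O T.
Proof. move=> HS H; have [n Hn] := Hopen _ HS; apply: Hn => i _; exact: H. Qed.

Definition uni (s : seq nat) (Z : nset) : nset := fun i => i \in s \/ Z i.
Definition acc (s : seq nat) (Y : nset) := forall Z, subset Z Y -> infinite Z -> O (uni s Z).
Definition rej (s : seq nat) (Y : nset) := forall Z, subset Z Y -> infinite Z -> ~ acc s Z.

Lemma acc_mono s Y Y' : acc s Y -> subset Y' Y -> acc s Y'.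
Proof. move=> H HY Z HZ; apply: H => i Hi; exact: HY (HZ _ Hi). Qed.
Lemma rej_mono s Y Y' : rej s Y -> subset Y' Y -> rej s Y'.
Proof. move=> H HY Z HZ; apply: H => i Hi; exact: HY (HZ _ Hi). Qed.
Lemma acc_sext s s' Y : s =i s' -> acc s Y -> acc s' Y.
Proof. move=> E H Z HZ HiZ; apply: O_ext (H Z HZ HiZ) _ => i; by rewrite /uni E. Qed.
Lemma rej_sext s s' Y : s =i s' -> rej s Y -> rej s' Y.
Proof. move=> E H Z HZ HiZ Ha; apply: (H Z HZ HiZ); apply: acc_sext Ha => i; by rewrite E. Qed.

Lemma dec_list (L : seq (seq nat)) Y : infinite Y ->
  exists Y', subset Y' Y /\ infinite Y' /\ forall s, s \in L -> acc s Y' \/ rej s Y'.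
Proof.
elim: L Y => [|a L IH] Y HY; first by exists Y; split => //; split.
have [Y1 [H1 [H2 H3]]] := IH Y HY.
case: (classic (exists Z, subset Z Y1 /\ infinite Z /\ acc a Z)) => [[Z [HZ1 [HZ2 HZ3]]]|Hn].
- exists Z; split; first by move=> i Hi; exact: H1 (HZ1 _ Hi).
  split => // s; rewrite in_cons => /orP [/eqP ->|Hs]; first by left.
  case: (H3 _ Hs) => H; [left; exact: acc_mono H HZ1|right; exact: rej_mono H HZ1].
- exists Y1; split => //; split => // s; rewrite in_cons => /orP [/eqP ->|Hs]; last exact: H3.
  right => Z HZ HZi Ha; apply: Hn; by exists Z.
Qed.

Definition R1 (p : seq nat) Y := forall s : seq nat, {subset s <= p} -> acc s Y \/ rej s Y.

Lemma R1_mono p Y Y' : R1 p Y -> subset Y' Y -> infinite Y' -> R1 p Y'.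
Proof. move=> H HY _ s Hs; case: (H s Hs) => H'; [left; exact: acc_mono H' HY|right; exact: rej_mono H' HY]. Qed.
Lemma R1_dense p Y : infinite Y -> exists Y', subset Y' Y /\ infinite Y' /\ R1 p Y'.
Proof.
move=> HY; have [Y' [H1 [H2 H3]]] := dec_list (subs p) Y HY.
exists Y'; split => //; split => // s Hs.
have [Q HQ E] := subs_complete p s Hs.
case: (H3 _ HQ) => H; [left; apply: acc_sext H|right; apply: rej_sext H] => i; by rewrite E.
Qed.

Definition above (s : seq nat) : nset := fun i => forall j, j \in s -> j < i.

Lemma above_ext s s' i : s =i s' -> above s i -> above s' i.
Proof. move=> E H j; rewrite -E; exact: H. Qed.

Variable X : nset.
Hypothesis HX : infinite X.

Theorem nash_williams : exists Y, subset Y X /\ infinite Y /\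
  ((forall Z, subset Z Y -> infinite Z -> O Z) \/ (forall Z, subset Z Y -> infinite Z -> ~ O Z)).
Proof.
have [c1 [Hc1 [Xc1 D1]]] := fusion R1 R1_mono R1_dense X HX.
set C1 := tail c1 0.
have C1X : subset C1 X by move=> i [j [_ ->]].
have C1inf : infinite C1 := tail_inf c1 Hc1 0.
have [Hacc|Hrej] : acc [::] C1 \/ rej [::] C1 by apply: (D1 0 [::]) => i; rewrite in_nil.
  exists C1; split => //; split => //; left => Z HZ HZi.
  apply: O_ext (Hacc Z HZ HZi) _ => i; rewrite /uni in_nil; split; [by case|by right].
set CA := fun s i => C1 i /\ above s i.
have Claim : forall s, (forall j, j \in s -> C1 j) -> rej s (CA s) ->
    exists b, forall z, C1 z -> b <= z -> above s z -> rej (z :: s) (CA (z :: s)).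
  move=> s Hs Hr; apply: NNPP => Hn.
  have Hb : forall b, exists z, C1 z /\ b <= z /\ above s z /\ ~ rej (z :: s) (CA (z :: s)).
    move=> b; apply: NNPP => Hb; apply: Hn; exists b => z Cz Hbz Haz; apply: NNPP => Hrz.
    apply: Hb; by exists z.
  set W := fun z => C1 z /\ above s z /\ acc (z :: s) (CA (z :: s)).
  have HW : forall z, C1 z -> above s z -> ~ rej (z :: s) (CA (z :: s)) -> W z.
    move=> z Cz Az Nr; split => //; split => //.
    case: Cz => j [_ Ej].
    have Hsub : {subset z :: s <= mkseq c1 j.+1}.
      move=> i; rewrite in_cons => /orP [/eqP ->|Hi]; apply/(mem_pre c1).
      - exists j; by split.
      - case: (Hs _ Hi) => j' [_ Ej']; exists j'; split => //.
        have := Az _ Hi; rewrite Ej Ej'; move/ltnW/(incr_inv c1 Hc1) => Hjj.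
        rewrite ltnS; done.
    have Hdec := D1 j.+1 (z :: s) Hsub.
    have E1 : subset (CA (z :: s)) (tail c1 j.+1).
      move=> i [[j'' [_ ->]] Ha]; exists j''; split => //.
      have := Ha _ (mem_head _ _); rewrite Ej => H.
      rewrite ltnNge; apply/negP => /(incr_le c1 Hc1 j'' j); by rewrite leqNgt H.
    have E2 : subset (tail c1 j.+1) (CA (z :: s)).
      move=> i [j'' [Hj ->]]; split; first by exists j''.
      have Hz : z < c1 j'' by rewrite Ej; apply: incr_lt.
      move=> k; rewrite in_cons => /orP [/eqP ->//|Hk]; exact: ltn_trans (Az _ Hk) Hz.
    case: Hdec => H; first exact: acc_mono H E1.
    exfalso; apply: Nr; exact: rej_mono H E1.
  have Winf : infinite W.
    move=> n; have [z [Cz [Hnz [Az Nr]]]] := Hb n; exists z; split => //; exact: HW.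
  have Wsub : subset W (CA s) by move=> i [Ci [Ai _]].
  apply: (Hr W Wsub Winf) => Z HZ HZi.
  have [z0 [Zz0 Hmin]] : exists n, Z n /\ forall m, Z m -> n <= m.
    apply: ex_min; have [m [_ Hm]] := HZi 0; by exists m.
  have [Cz0 [Az0 Hacc0]] := HZ _ Zz0.
  set Z' := fun i => Z i /\ z0.+1 <= i.
  have HZ' : subset Z' (CA (z0 :: s)).
    move=> i [Zi Hi]; have [Ci [Ai _]] := HZ _ Zi; split => // k; rewrite in_cons.
    case/orP => [/eqP ->//|Hk]; exact: Ai.
  apply: O_ext (Hacc0 Z' HZ' (infinite_above _ _ HZi)) _ => i; rewrite /uni in_cons; split.
  - case => [/orP [/eqP ->|Hi]|[Zi _]]; [by right|by left|by right].
  - case => [Hi|Zi]; first by left; rewrite Hi orbT.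
    case: (eqVneq i z0) => [->|Hne]; first by left; apply/orP; left.
    right; split => //; rewrite ltn_neqAle eq_sym Hne; exact: Hmin.
set R2 := fun (p : seq nat) (Y : nset) =>
  ((forall j, j \in p -> C1 j) /\ forall s : seq nat, {subset s <= p} -> rej s (CA s)) ->
  forall s : seq nat, {subset s <= p} -> forall z, Y z -> C1 z -> above p z -> rej (z :: s) (CA (z :: s)).
have R2_mono : forall p Y Y', R2 p Y -> subset Y' Y -> infinite Y' -> R2 p Y'.
  move=> p Y Y' H HY _ Hp s Hs z Yz; exact: H Hp s Hs z (HY _ Yz).
have CA_ext : forall s s' i, s =i s' -> CA s i -> CA s' i.
  move=> s0 s' i E [Ci Ai]; split => //; exact: above_ext E Ai.
have R2_dense : forall p Y, infinite Y -> exists Y', subset Y' Y /\ infinite Y' /\ R2 p Y'.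
  move=> p Y HY.
  case: (classic ((forall j, j \in p -> C1 j) /\ forall s : seq nat, {subset s <= p} -> rej s (CA s)))
     => [[Hp1 Hp2]|Hn]; last first.
    exists Y; split => //; split => // H; by case: (Hn H).
  have [b Hb] := list_bound _ (subs p)
     (fun Q b => forall z, C1 z -> b <= z -> above Q z -> rej (z :: Q) (CA (z :: Q)))
     (fun Q b b' Hbb' H z Cz Hz Az => H z Cz (leq_trans Hbb' Hz) Az)
     (fun Q HQ => Claim Q (fun j Hj => Hp1 j (subs_sound _ _ HQ _ Hj)) (Hp2 Q (subs_sound _ _ HQ))).
  exists (fun i => Y i /\ b <= i); split; first by move=> i [].
  split; first exact: infinite_above.
  move=> _ s Hs z [Yz Hbz] Cz Az.
  have [Q HQ E] := subs_complete p s Hs.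
  have H := Hb Q HQ z Cz Hbz (fun j Hj => Az j (subs_sound _ _ HQ _ Hj)).
  have E' : (z :: Q) =i (z :: s) by move=> i; rewrite !in_cons E.
  have H2 : rej (z :: Q) (CA (z :: s)).
    apply: rej_mono H _ => i Hi; apply: CA_ext Hi => k; by rewrite E'.
  exact: rej_sext E' H2.
have [c2 [Hc2 [C1c2 D2]]] := fusion R2 R2_mono R2_dense C1 C1inf.
have Hp1 : forall k j, j \in mkseq c2 k -> C1 j.
  by move=> k j /(mem_pre c2) [j' [_ ->]].
have Inv : forall k (s : seq nat), {subset s <= mkseq c2 k} -> rej s (CA s).
  elim => [|k IH] s Hs.
  - have E : [::] =i s by move=> i; rewrite in_nil; apply/esym/negP => Hi; have := Hs _ Hi.
    apply: rej_sext E _; apply: rej_mono Hrej _ => i [Ci _]; exact: Ci.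
  - case Hz: (c2 k \in s).
    + set s' := [seq i <- s | i != c2 k].
      have Hs' : {subset s' <= mkseq c2 k}.
        move=> i; rewrite mem_filter => /andP [Hne Hi]; move: (Hs _ Hi).
        by rewrite mkseqS mem_rcons in_cons (negbTE Hne).
      have Ht : tail c2 k (c2 k) by exists k.
      have H := D2 k (conj (Hp1 k) IH) s' Hs' (c2 k) Ht (C1c2 k)
                  (fun j Hj => tail_above c2 Hc2 k (c2 k) j Ht Hj).
      have E : (c2 k :: s') =i s.
        move=> i; rewrite in_cons mem_filter; case: (eqVneq i (c2 k)) => [->|Hne] //=.
      apply: (rej_sext _ _ _ E); apply: rej_mono H _ => i Hi; apply: CA_ext Hi => j; by rewrite E.
    + apply: IH => i Hi; move: (Hs _ Hi); rewrite mkseqS mem_rcons in_cons.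
      case/orP => [/eqP Ei|//]; by rewrite -Ei Hi in Hz.
exists (tail c2 0); split.
  move=> i [j [_ ->]]; exact: C1X (C1c2 j).
split; first exact: tail_inf.
right => Z HZ HZi HO.
have [n Hn] := Hopen _ HO.
set s := [seq i <- iota 0 n | bP (Z i)].
have Hs : {subset s <= mkseq c2 n}.
  move=> i; rewrite mem_filter mem_iota add0n => /andP [/bPP Zi Hin].
  case: (HZ _ Zi) => j [_ Ej]; apply/(mem_pre c2); exists j; split => //.
  apply: leq_ltn_trans (incr_ge c2 Hc2 j) _; by rewrite -Ej.
have Hr := Inv n s Hs.
set W := fun i => Z i /\ n <= i.
have HW : subset W (CA s).
  move=> i [Zi Hni]; split.
  - case: (HZ _ Zi) => j [_ ->]; exact: C1c2.
  - move=> j; rewrite mem_filter mem_iota add0n => /andP [_ Hj]; exact: leq_trans Hj Hni.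
apply: (Hr W HW (infinite_above _ _ HZi)) => Z' HZ' HZ'i.
apply: Hn => i Hi; rewrite /uni mem_filter mem_iota add0n Hi /=; split.
- move=> Zi; left; rewrite andbT; exact/bPP.
- case => [/andP [/bPP //]|Zi]; have [_ Hni] := HZ' _ Zi; by rewrite leqNgt Hi in Hni.
Qed.
End NW.
Section Inv.
Variable X : nset.
Lemma inv_zero v y : eval X PZero v y -> y = 0.
Proof. by move=> H; inversion H. Qed.
Lemma inv_succ v y : eval X PSucc v y -> y = (head 0 v).+1.
Proof. by move=> H; inversion H. Qed.
Lemma inv_proj i v y : eval X (PProj i) v y -> y = nth 0 v i.
Proof. by move=> H; inversion H. Qed.
Lemma inv_oracle v y : eval X POracle v y ->
  exists x v', v = x :: v' /\ ((X x /\ y = 1) \/ (~ X x /\ y = 0)).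
Proof. move=> H; inversion H; subst; do 2 eexists; split; eauto. Qed.
Lemma inv_comp f gs v y : eval X (PComp f gs) v y -> exists ws, evals X gs v ws /\ eval X f ws y.
Proof. move=> H; inversion H; subst; eauto. Qed.
Lemma inv_prec f g v y : eval X (PPrec f g) v y ->
  (exists v', v = 0 :: v' /\ eval X f v' y) \/
  (exists n v' z, v = n.+1 :: v' /\ eval X (PPrec f g) (n :: v') z /\ eval X g (n :: z :: v') y).
Proof. move=> H; inversion H; subst; [left|right]; eauto 10. Qed.
Lemma inv_mu f v n : eval X (PMu f) v n ->
  eval X f (n :: v) 0 /\ (forall m, m < n -> exists k, eval X f (m :: v) k.+1).
Proof. move=> H; inversion H; subst; eauto. Qed.
Lemma inv_nil v ws : evals X nil v ws -> ws = [::].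
Proof. by move=> H; inversion H. Qed.
Lemma inv_cons g gs v ws : evals X (g :: gs) v ws ->
  exists w ws', ws = w :: ws' /\ eval X g v w /\ evals X gs v ws'.
Proof. move=> H; inversion H; subst; eauto. Qed.
End Inv.
Fixpoint eval_det X p v y1 (H1 : eval X p v y1) {struct H1} : forall y2, eval X p v y2 -> y1 = y2
with evals_det X gs v w1 (H1 : evals X gs v w1) {struct H1} : forall w2, evals X gs v w2 -> w1 = w2.
Proof.
- case: H1.
  + by move=> v0 y2 /inv_zero.
  + by move=> v0 y2 /inv_succ.
  + by move=> i v0 y2 /inv_proj.
  + move=> x v0 Hx y2 /inv_oracle [x' [v' [[<- _]]]] [[]|[]] //.
  + move=> x v0 Hx y2 /inv_oracle [x' [v' [[<- _]]]] [[]|[]] //.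
  + move=> f gs v0 ws y Hs Hf y2 /inv_comp [ws2 [Hs2 Hf2]].
    have E := evals_det _ _ _ _ Hs _ Hs2. subst. exact: (eval_det _ _ _ _ Hf _ Hf2).
  + move=> f g v0 y Hf y2 /inv_prec [[v' [[<-] Hf2]]|[n [v' [z [//]]]]].
    exact: (eval_det _ _ _ _ Hf _ Hf2).
  + move=> f g n v0 z y Hp Hg y2 /inv_prec [[v' [//]]|[n' [v' [z' [[<- <-] [Hp2 Hg2]]]]]].
    have E := eval_det _ _ _ _ Hp _ Hp2. subst. exact: (eval_det _ _ _ _ Hg _ Hg2).
  + move=> f v0 n H0 Hlt y2 /inv_mu [H02 Hlt2].
    case: (ltngtP n y2) => // Hc.
    * destruct (Hlt2 _ Hc) as [k Hk]. by have := eval_det _ _ _ _ H0 _ Hk.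
    * destruct (Hlt _ Hc) as [k Hk]. exact: (False_ind _ (match eval_det _ _ _ _ Hk _ H02 in _ = t return (match t with 0 => False | _ => True end) with erefl => I end)).
- case: H1.
  + by move=> v0 w2 /inv_nil.
  + move=> g gs0 v0 w ws Hg Hs w2 /inv_cons [w' [ws' [-> [Hg2 Hs2]]]].
    by rewrite (eval_det _ _ _ _ Hg _ Hg2) (evals_det _ _ _ _ Hs _ Hs2).
Qed.

Definition prog_ind' (P : prog -> Prop) (H0 : P PZero) (H1 : P PSucc) (H2 : forall i, P (PProj i))
  (H3 : P POracle) (H4 : forall f gs, P f -> (forall g, In g gs -> P g) -> P (PComp f gs))
  (H5 : forall f g, P f -> P g -> P (PPrec f g)) (H6 : forall f, P f -> P (PMu f)) : forall p, P p :=
  fix F p := match p with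
  | PZero => H0 | PSucc => H1 | PProj i => H2 i | POracle => H3
  | PComp f gs => H4 f gs (F f)
      ((fix G (gs : list prog) : forall g, In g gs -> P g :=
         match gs with
         | nil => fun g H => False_ind _ H
         | g' :: gs' => fun g H => match H with
                                   | or_introl E => eq_ind g' P (F g') g E
                                   | or_intror H' => G gs' g H' end
         end) gs)
  | PPrec f g => H5 f g (F f) (F g)
  | PMu f => H6 f (F f)
  end.

Definition agree (X Y : nset) u := forall i, i < u -> (X i <-> Y i).
Lemma agree_mono X Y u u' : agree X Y u -> u' <= u -> agree X Y u'.
Proof. move=> H Hu i Hi; apply: H; exact: leq_trans Hi Hu. Qed.

Definition Puse p := forall X v y, eval X p v y -> exists u, forall Y, agree X Y u -> eval Y p v y.

Lemma bounded_choice (Q : nat -> nat -> Prop) n :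
  (forall m u u', u <= u' -> Q m u -> Q m u') ->
  (forall m, m < n -> exists u, Q m u) -> exists u, forall m, m < n -> Q m u.
Proof.
move=> Hm; elim: n => [|n IH] H; first by exists 0.
have [u1 H1] := IH (fun m Hm' => H m (ltnW Hm')).
have [u2 H2] := H n (ltnSn n).
exists (maxn u1 u2) => m; rewrite ltnS leq_eqVlt => /orP [/eqP ->|Hmn].
- apply: Hm H2; exact: leq_maxr.
- apply: Hm (H1 _ Hmn); exact: leq_maxl.
Qed.

Lemma use_all : forall p, Puse p.
Proof.
apply: prog_ind'.
- move=> X v y /inv_zero ->; exists 0 => Y _; exact: eZero.
- move=> X v y /inv_succ ->; exists 0 => Y _; exact: eSucc.
- move=> i X v y /inv_proj ->; exists 0 => Y _; exact: eProj.
- move=> X v y /inv_oracle [x [v' [-> [[Hx ->]|[Hx ->]]]]]; exists x.+1 => Y HY.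
  + apply: eOracleIn; exact/(HY x (ltnSn x)).
  + apply: eOracleOut => HYx; apply: Hx; exact/(HY x (ltnSn x)).
- move=> f gs Hf Hgs X v y /inv_comp [ws [Hs Hfe]].
  have Hss : forall gs0 ws0, (forall g, In g gs0 -> Puse g) -> evals X gs0 v ws0 ->
      exists u, forall Y, agree X Y u -> evals Y gs0 v ws0.
    elim => [|g gs0 IH] ws0 Hg.
    + move=> /inv_nil ->; exists 0 => Y _; exact: esNil.
    + move=> /inv_cons [w [ws' [-> [Hge Hse]]]].
      have [u1 H1] := Hg g (or_introl erefl) _ _ _ Hge.
      have [u2 H2] := IH ws' (fun g' H => Hg g' (or_intror H)) Hse.
      exists (maxn u1 u2) => Y HY; apply: esCons.
      * apply: H1; apply: agree_mono HY _; exact: leq_maxl.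
      * apply: H2; apply: agree_mono HY _; exact: leq_maxr.
  have [u1 H1] := Hss gs ws Hgs Hs.
  have [u2 H2] := Hf _ _ _ Hfe.
  exists (maxn u1 u2) => Y HY; apply: eComp.
  * apply: H1; apply: agree_mono HY _; exact: leq_maxl.
  * apply: H2; apply: agree_mono HY _; exact: leq_maxr.
- move=> f g Hf Hg X.
  have Hn : forall n v y, eval X (PPrec f g) (n :: v) y ->
      exists u, forall Y, agree X Y u -> eval Y (PPrec f g) (n :: v) y.
    elim => [|n IH] v y /inv_prec [[v' [E Hfe]]|[n' [v' [z [E [Hp Hge]]]]]]; case: E => //.
    + move=> ?; subst. have [u H] := Hf _ _ _ Hfe; exists u => Y HY; apply: ePrec0; exact: H.
    + move=> ? ?; subst. have [u1 H1] := IH _ _ Hp. have [u2 H2] := Hg _ _ _ Hge.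
      exists (maxn u1 u2) => Y HY; apply: ePrecS.
      * apply: H1; apply: agree_mono HY _; exact: leq_maxl.
      * apply: H2; apply: agree_mono HY _; exact: leq_maxr.
  move=> v y H; case: v H => [|n v] H.
  + by case/inv_prec: H => [[v' [//]]|[n' [v' [z [//]]]]].
  + exact: Hn.
- move=> f Hf X v n /inv_mu [H0 Hlt].
  have [u1 H1] := Hf _ _ _ H0.
  have [u2 H2] := bounded_choice (fun m u => forall Y, agree X Y u -> exists k, eval Y f (m :: v) k.+1) n
    (fun m u u' Hu H Y HY => H Y (agree_mono _ _ _ _ HY Hu))
    (fun m Hm => let: ex_intro k Hk := Hlt m Hm in
       let: ex_intro u Hu := Hf _ _ _ Hk in
       ex_intro _ u (fun Y HY => ex_intro _ k (Hu Y HY))).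
  exists (maxn u1 u2) => Y HY; apply: eMu.
  + apply: H1; apply: agree_mono HY _; exact: leq_maxl.
  + move=> m Hm; apply: H2 => //; apply: agree_mono HY _; exact: leq_maxr.
Qed.

Lemma use_lemma X p v y : eval X p v y -> exists u, forall Y, agree X Y u -> eval Y p v y.
Proof. exact: use_all. Qed.

Lemma eval_ext X Y p v y : (forall i, X i <-> Y i) -> eval X p v y -> eval Y p v y.
Proof. move=> E /use_lemma [u Hu]; apply: Hu => i _; exact: E. Qed.

Section Arith.
Variable X : nset.
Lemma ev_eq p v y y' : eval X p v y -> y = y' -> eval X p v y'.
Proof. by move=> H <-. Qed.
Lemma comp1 f g v w y : eval X g v w -> eval X f [:: w] y -> eval X (PComp f [:: g]) v y.
Proof. move=> Hg Hf; apply: eComp Hf; apply: esCons Hg (esNil _ _). Qed.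
Lemma comp2 f g1 g2 v w1 w2 y : eval X g1 v w1 -> eval X g2 v w2 -> eval X f [:: w1; w2] y ->
  eval X (PComp f [:: g1; g2]) v y.
Proof. move=> H1 H2 Hf; apply: eComp Hf; apply: esCons H1 (esCons H2 (esNil _ _)). Qed.
Arguments comp1 {f g v w y}. Arguments comp2 {f g1 g2 v w1 w2 y}. Arguments ev_eq {p v y y'}.

Definition one := PComp PSucc [:: PZero].
Lemma one_ok v : eval X one v 1.
Proof. apply: comp1 (eZero _ _) (eSucc _ _). Qed.
Fixpoint cst n := if n is n'.+1 then PComp PSucc [:: cst n'] else PZero.
Lemma cst_ok n v : eval X (cst n) v n.
Proof. elim: n => [|n IH] /=; [exact: eZero|exact: comp1 IH (eSucc _ _)]. Qed.
Lemma proj_ok i v : eval X (PProj i) v (nth 0 v i).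
Proof. exact: eProj. Qed.

Definition pred_p := PPrec PZero (PProj 0).
Lemma pred_ok x v : eval X pred_p (x :: v) x.-1.
Proof. elim: x => [|x IH]; [exact: ePrec0 _ (eZero _ _)|exact: ePrecS IH (eProj _ _ _)]. Qed.

Definition add_p := PPrec (PProj 0) (PComp PSucc [:: PProj 1]).
Lemma add_ok x y v : eval X add_p (x :: y :: v) (x + y).
Proof.
elim: x => [|x IH]; first exact: ePrec0 _ (eProj _ _ _).
apply: ePrecS IH _; exact: comp1 (eProj _ _ _) (eSucc _ _).
Qed.

Definition subr_p := PPrec (PProj 0) (PComp pred_p [:: PProj 1]).
Lemma subr_ok y x v : eval X subr_p (y :: x :: v) (x - y).
Proof.
elim: y => [|y IH]; first by rewrite subn0; exact: ePrec0 _ (eProj _ _ _).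
apply: ePrecS IH _; apply: comp1 (eProj _ _ _) _; apply: ev_eq (pred_ok _ _) _; by rewrite subnS.
Qed.
Definition sub_p := PComp subr_p [:: PProj 1; PProj 0].
Lemma sub_ok x y v : eval X sub_p (x :: y :: v) (x - y).
Proof. apply: comp2 (eProj _ _ _) (eProj _ _ _) _; exact: subr_ok. Qed.

Definition mul_p := PPrec PZero (PComp add_p [:: PProj 1; PProj 2]).
Lemma mul_ok x y v : eval X mul_p (x :: y :: v) (x * y).
Proof.
elim: x => [|x IH]; first exact: ePrec0 _ (eZero _ _).
apply: ePrecS IH _; apply: comp2 (eProj _ _ _) (eProj _ _ _) _.
apply: ev_eq (add_ok _ _ _) _; by rewrite mulSn addnC.
Qed.

Definition notp := PComp sub_p [:: one; PProj 0].
Lemma not_ok x v : eval X notp (x :: v) (1 - x).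
Proof. apply: comp2 (one_ok _) (eProj _ _ _) _; exact: sub_ok. Qed.

Definition mod2_p := PPrec PZero (PComp notp [:: PProj 1]).
Lemma mod2_ok x v : eval X mod2_p (x :: v) (odd x).
Proof.
elim: x => [|x IH]; first exact: ePrec0 _ (eZero _ _).
apply: ePrecS IH _; apply: comp1 (eProj _ _ _) _; apply: ev_eq (not_ok _ _) _; rewrite /=; by case: (odd x).
Qed.

Definition div2_p := PPrec PZero (PComp add_p [:: PProj 1; PComp mod2_p [:: PProj 0]]).
Lemma div2_ok x v : eval X div2_p (x :: v) (x./2).
Proof.
elim: x => [|x IH]; first exact: ePrec0 _ (eZero _ _).
apply: ePrecS IH _; apply: comp2 (eProj _ _ _) (comp1 (eProj _ _ _) (mod2_ok _ _)) _.
apply: ev_eq (add_ok _ _ _) _; rewrite /= addnC; have := uphalf_half x; by rewrite uphalfE => ->.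
Qed.

Definition sg_p := PComp sub_p [:: one; notp].
Lemma sg_ok x v : eval X sg_p (x :: v) (1 - (1 - x)).
Proof. apply: comp2 (one_ok _) (not_ok _ _) _; exact: sub_ok. Qed.

Definition isf f := PComp notp [:: PComp add_p [:: PComp sub_p [:: PProj 0; cst f];
                                                 PComp sub_p [:: cst f; PProj 0]]].
Lemma isf_ok f i v : eval X (isf f) (i :: v) (i == f).
Proof.
apply: (ev_eq (comp1 (comp2 (comp2 (eProj _ _ _) (cst_ok _ _) (sub_ok _ _ _))
              (comp2 (cst_ok _ _) (eProj _ _ _) (sub_ok _ _ _)) (add_ok _ _ _)) (not_ok _ _))) => /=.
case: (ltngtP i f) => H.
- have -> : i - f = 0 by apply/eqP; rewrite subn_eq0 ltnW.
  rewrite add0n; have : 0 < f - i by rewrite subn_gt0.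
  case: (f - i) => // n _; by rewrite (ltn_eqF H).
- have -> : f - i = 0 by apply/eqP; rewrite subn_eq0 ltnW.
  rewrite addn0; have : 0 < i - f by rewrite subn_gt0.
  case: (i - f) => // n _; by rewrite (gtn_eqF H).
- by rewrite H subnn.
Qed.

Fixpoint inFv (i : nat) (F : seq nat) : nat := if F is f :: F' then (i == f) + inFv i F' else 0.
Lemma inFv_pos i F : (0 < inFv i F) = (i \in F).
Proof. elim: F => //= f F IH; rewrite in_cons -IH; by case: (i == f). Qed.
Fixpoint inF_p (F : seq nat) : prog :=
  if F is f :: F' then PComp add_p [:: isf f; inF_p F'] else PZero.
Lemma inF_ok F i v : eval X (inF_p F) (i :: v) (inFv i F).
Proof. elim: F => [|f F IH] /=; [exact: eZero|exact: comp2 (isf_ok _ _ _) IH (add_ok _ _ _)]. Qed.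

Definition hf (c : nat) := (c.-1)./2.
Definition half_p := PComp div2_p [:: pred_p].
Lemma half_ok c v : eval X half_p (c :: v) (hf c).
Proof. apply: comp1 (pred_ok _ _) (div2_ok _ _). Qed.
Definition itr_p := PPrec (PProj 0) (PComp half_p [:: PProj 1]).
Lemma itr_ok i a v : eval X itr_p (i :: a :: v) (iter i hf a).
Proof.
elim: i => [|i IH]; first exact: ePrec0 _ (eProj _ _ _).
apply: ePrecS IH _; exact: comp1 (eProj _ _ _) (half_ok _ _).
Qed.
Definition bitv i a := odd (iter i hf a).-1.
Definition bit_p := PComp mod2_p [:: PComp pred_p [:: itr_p]].
Lemma bit_ok i a v : eval X bit_p (i :: a :: v) (bitv i a).
Proof. apply: comp1 (comp1 (itr_ok _ _ _) (pred_ok _ _)) (mod2_ok _ _). Qed.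

Definition lookv F i a := 1 - (1 - (inFv i F + bitv i a)).
Definition look_p F := PComp sg_p [:: PComp add_p [:: PComp (inF_p F) [:: PProj 0]; bit_p]].
Lemma look_ok F i a v : eval X (look_p F) (i :: a :: v) (lookv F i a).
Proof.
apply: comp1 _ (sg_ok _ _).
exact: comp2 (comp1 (eProj _ _ _) (inF_ok _ _ _)) (bit_ok _ _ _) (add_ok _ _ _).
Qed.

Definition T_p := PComp div2_p [:: PComp mul_p [:: PProj 0; PComp PSucc [:: PProj 0]]].
Definition Tv m := (m * m.+1)./2.
Lemma T_ok m v : eval X T_p (m :: v) (Tv m).
Proof. apply: comp1 (comp2 (eProj _ _ _) (comp1 (eProj _ _ _) (eSucc _ _)) (mul_ok _ _ _)) (div2_ok _ _). Qed.
Definition test_p := PComp sub_p [:: PComp PSucc [:: PProj 1]; PComp T_p [:: PComp PSucc [:: PProj 0]]].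
Lemma test_ok w n v : eval X test_p (w :: n :: v) (n.+1 - Tv w.+1).
Proof.
apply: comp2 (comp1 (eProj _ _ _) (eSucc _ _)) (comp1 (comp1 (eProj _ _ _) (eSucc _ _)) (T_ok _ _)) _.
exact: sub_ok.
Qed.
Definition b_p := PComp sub_p [:: PProj 1; PComp T_p [:: PProj 0]].
Lemma b_ok w n v : eval X b_p (w :: n :: v) (n - Tv w).
Proof. apply: comp2 (eProj _ _ _) (comp1 (eProj _ _ _) (T_ok _ _)) _; exact: sub_ok. Qed.
Definition a_p := PComp sub_p [:: PProj 0; b_p].
Lemma a_ok w n v : eval X a_p (w :: n :: v) (w - (n - Tv w)).
Proof. apply: comp2 (eProj _ _ _) (b_ok _ _ _) _; exact: sub_ok. Qed.
End Arith.
Arguments comp1 {X f g v w y}. Arguments comp2 {X f g1 g2 v w1 w2 y}. Arguments ev_eq {X p v y y'}.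

Definition DIV := PMu one.
Lemma DIV_none X v y : ~ eval X DIV v y.
Proof. move=> /inv_mu [H _]; by have := eval_det _ _ _ _ H _ (one_ok X _). Qed.

Fixpoint Tr (L : prog) (p : prog) (k : nat) : prog :=
  match p with
  | PZero => PZero
  | PSucc => if k is 0 then one else PSucc
  | PProj i => if i < k then PProj i else PZero
  | POracle => if k is 0 then DIV else PComp L [:: PProj 0; PProj k]
  | PComp f gs => PComp (Tr L f (size gs)) (map (fun g => Tr L g k) gs ++ [:: PProj k])
  | PPrec f g => if k is k'.+1 then PPrec (Tr L f k') (Tr L g k'.+2) else DIV
  | PMu f => PMu (Tr L f k.+1)
  end.

Lemma evals_size X gs v ws : evals X gs v ws -> size ws = size gs.
Proof. elim: gs ws => [|g gs IH] ws; first by move/inv_nil ->.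
move/inv_cons => [w [ws' [-> [_ H]]]] /=; by rewrite (IH _ H). Qed.

Section TrSec.
Variables (L : prog) (X : nset) (c : nat).
Hypothesis HL : forall i, (X i /\ eval empty_set L [:: i; c] 1) \/ (~ X i /\ eval empty_set L [:: i; c] 0).

Lemma nth_c v : nth 0 (v ++ [:: c]) (size v) = c.
Proof. by rewrite nth_cat ltnn subnn. Qed.

Lemma Tr_sound : forall p v y, eval X p v y -> eval empty_set (Tr L p (size v)) (v ++ [:: c]) y.
Proof.
apply: prog_ind'.
- move=> v y /inv_zero ->; exact: eZero.
- move=> [|x v] y /inv_succ -> /=; [exact: one_ok|exact: eSucc].
- move=> i v y /inv_proj -> /=; case: ifP => H.
  + apply: ev_eq (eProj _ _ _) _; by rewrite nth_cat H.
  + apply: ev_eq (eZero _ _) _; by rewrite nth_default // leqNgt H.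
- move=> v y /inv_oracle [x [v' [-> Hxy]]] /=.
  apply: comp2 (eProj _ _ _) (eProj _ _ _) _.
  rewrite [nth _ _ (size v').+1](nth_c (x :: v')) /=.
  case: (HL x) => [[Hx HLx]|[Hx HLx]]; case: Hxy => [[Hx' ->]|[Hx' ->]] //; by case: Hx.
- move=> f gs Hf Hgs v y /inv_comp [ws [Hs Hfe]] /=.
  have Hss : forall gs0 ws0, (forall g, In g gs0 -> forall v y, eval X g v y ->
        eval empty_set (Tr L g (size v)) (v ++ [:: c]) y) -> evals X gs0 v ws0 ->
      evals empty_set (map (fun g => Tr L g (size v)) gs0 ++ [:: PProj (size v)]) (v ++ [:: c]) (ws0 ++ [:: c]).
    elim => [|g gs0 IH] ws0 Hg.
    + move=> /inv_nil -> /=; apply: esCons (esNil _ _); apply: ev_eq (eProj _ _ _) _; exact: nth_c.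
    + move=> /inv_cons [w [ws' [-> [Hge Hse]]]] /=; apply: esCons.
      * exact: Hg g (or_introl erefl) _ _ Hge.
      * exact: IH ws' (fun g' H => Hg g' (or_intror H)) Hse.
  apply: eComp (Hss gs ws Hgs Hs) _.
  rewrite -(evals_size _ _ _ _ Hs); exact: Hf.
- move=> f g Hf Hg v y H; case: v H => [|n v] H.
  + by case/inv_prec: H => [[v' [//]]|[n' [v' [z [//]]]]].
  + rewrite /=. elim: n y H => [|n IH] y /inv_prec [[v' [E Hfe]]|[n' [v' [z [E [Hp Hge]]]]]]; case: E => //.
    * move=> ?; subst; apply: ePrec0; exact: Hf.
    * move=> ? ?; subst; apply: ePrecS (IH _ Hp) _; exact: Hg _ _ Hge.
- move=> f Hf v n /inv_mu [H0 Hlt] /=; apply: eMu.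
  + exact: (Hf (n :: v)).
  + move=> m Hm; have [k Hk] := Hlt m Hm; exists k; exact: (Hf (m :: v)).
Qed.

Lemma Tr_complete : forall p v y, eval empty_set (Tr L p (size v)) (v ++ [:: c]) y -> eval X p v y.
Proof.
apply: prog_ind'.
- move=> v y /inv_zero ->; exact: eZero.
- move=> [|x v] y /=.
  + move=> H; have := eval_det _ _ _ _ H _ (one_ok _ _) => ->; exact: eSucc.
  + move/inv_succ => ->; exact: eSucc.
- move=> i v y /=; case: ifP => H.
  + move/inv_proj ->; rewrite nth_cat H; exact: eProj.
  + move/inv_zero ->; rewrite -(nth_default 0 (s := v) (n := i)); first exact: eProj.
    by rewrite leqNgt H.
- move=> [|x v] y /=; first by move/DIV_none.
  move/inv_comp => [ws [/inv_cons [w1 [ws1 [-> [/inv_proj -> /inv_cons [w2 [ws2 [-> [/inv_proj -> /inv_nil ->]]]]]]]] HLe]].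
  move: HLe; rewrite [nth _ _ (size v).+1](nth_c (x :: v)) /= => HLe.
  case: (HL x) => [[Hx HLx]|[Hx HLx]]; rewrite (eval_det _ _ _ _ HLe _ HLx).
  + exact: eOracleIn.
  + exact: eOracleOut.
- move=> f gs Hf Hgs v y /inv_comp [ws' [Hs Hfe]].
  have Hss : forall gs0 ws0, (forall g, In g gs0 -> forall v y,
        eval empty_set (Tr L g (size v)) (v ++ [:: c]) y -> eval X g v y) ->
      evals empty_set (map (fun g => Tr L g (size v)) gs0 ++ [:: PProj (size v)]) (v ++ [:: c]) ws0 ->
      exists ws, ws0 = ws ++ [:: c] /\ evals X gs0 v ws.
    elim => [|g gs0 IH] ws0 Hg.
    + move=> /inv_cons [w [ws1 [-> [/inv_proj -> /inv_nil ->]]]]; exists [::]; split; last exact: esNil.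
      by rewrite nth_c.
    + move=> /inv_cons [w [ws1 [-> [Hge Hse]]]].
      have [ws [-> Hws]] := IH ws1 (fun g' H => Hg g' (or_intror H)) Hse.
      exists (w :: ws); split => //; apply: esCons Hws; exact: Hg g (or_introl erefl) _ _ Hge.
  have [ws [Ews Hws]] := Hss gs ws' Hgs Hs; subst ws'.
  have Hsz := evals_size _ _ _ _ Hws; apply: eComp Hws _; apply: Hf; by rewrite Hsz.
- move=> f g Hf Hg [|n v] y /=; first by move/DIV_none.
  elim: n y => [|n IH] y /inv_prec [[v' [E Hfe]]|[n' [v' [z [E [Hp Hge]]]]]]; case: E => //.
  + move=> ?; subst. apply: ePrec0; exact: Hf.
  + move=> ? ?; subst. apply: ePrecS (IH _ Hp) _; exact: (Hg (_ :: _ :: v)).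
- move=> f Hf v n /inv_mu [H0 Hlt] /=; apply: eMu.
  + exact: (Hf (n :: v)).
  + move=> m Hm; have [k Hk] := Hlt m Hm; exists k; exact: (Hf (m :: v)).
Qed.
End TrSec.
Arguments comp1 {X f g v w y}. Arguments comp2 {X f g1 g2 v w1 w2 y}. Arguments ev_eq {X p v y y'}.

Lemma hf_code b s : hf (code_str (b :: s)) = code_str s.
Proof.
by rewrite /hf /= addn1 addSn /= addnC half_bit_double.
Qed.

Lemma bitv_code s i : bitv i (code_str s) = nth false s i.
Proof.
elim: s i => [|b s IH] i.
- have H0 : forall i, iter i hf 0 = 0 by elim => // i' IHi; rewrite iterS IHi.
  by rewrite /bitv nth_nil /= H0.
- case: i => [|i].
  + rewrite /bitv /= addn1 addSn /= oddD odd_double; by case: b.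
  + by rewrite /= -IH /bitv iterSr hf_code.
Qed.

Lemma code_surj a : exists s, code_str s = a.
Proof.
elim: a {-2}a (leqnn a) => [|n IH] a Ha.
- exists [::]; by move: Ha; rewrite leqn0 => /eqP ->.
- case: a Ha => [|a] Ha; first by exists [::].
  have [s Hs] : exists s, code_str s = a./2 by apply: IH; rewrite leq_half_double -ltnS in Ha *; lia.
  exists (odd a :: s) => /=; rewrite Hs addn1 addSn addnC odd_double_half //.
Qed.

Lemma half_div2 n : n./2 = Nat.div2 n /\ n.+1./2 = Nat.div2 n.+1.
Proof. elim: n => [|n [IH1 IH2]] //; split; first exact: IH2.
have -> : n.+2./2 = (n./2).+1 by []. by rewrite IH1. Qed.

Lemma halfD2 x y : (x + y.*2)./2 = x./2 + y.
Proof. elim: y => [|y IH]; first by rewrite double0 !addn0. by rewrite doubleS !addnS -IH. Qed.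

Lemma TvS m : Tv m.+1 = Tv m + m.+1.
Proof.
rewrite /Tv -halfD2; congr (_./2); rewrite -muln2 [m * _]mulnC -mulnDr; congr (_ * _).
by rewrite addn2.
Qed.

Lemma Tv_mono m m' : m <= m' -> Tv m <= Tv m'.
Proof.
move=> H; rewrite -(subnKC H); elim: (m' - m) => [|d IH]; first by rewrite addn0.
by rewrite addnS TvS; apply: leq_trans IH (leq_addr _ _).
Qed.

Lemma cpairE a b : cpair a b = Tv (a + b) + b.
Proof. by rewrite /cpair /Tv -Nat.div2_div (half_div2 _).1. Qed.

Lemma Tv_unique n w w' : Tv w <= n < Tv w.+1 -> Tv w' <= n < Tv w'.+1 -> w = w'.
Proof.
move=> /andP [H1 H2] /andP [H1' H2'].
case: (ltngtP w w') => // H.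
- have := Tv_mono _ _ H; move=> H3; have := leq_trans H3 H1'; by rewrite leqNgt H2.
- have := Tv_mono _ _ H; move=> H3; have := leq_trans H3 H1; by rewrite leqNgt H2'.
Qed.

Definition W_p := PMu test_p.
Lemma W_ok X n : exists w, Tv w <= n < Tv w.+1 /\ eval X W_p [:: n] w.
Proof.
have Hex : exists w, n < Tv w.+1.
  exists n; rewrite TvS; exact: leq_trans (ltnSn n) (leq_addl _ _).
case: (ex_minnP Hex) => w Hw Hmin; exists w; split.
- rewrite Hw andbT; case: w Hw Hmin => // w _ Hmin; rewrite leqNgt; apply/negP => H.
  have := Hmin _ H; by rewrite ltnn.
- apply: eMu.
  + apply: ev_eq (test_ok _ _ _ _) _; apply/eqP; by rewrite subn_eq0.
  + move=> m Hm; exists (n - Tv m.+1); apply: ev_eq (test_ok _ _ _ _) _.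
    rewrite subSn //; rewrite leqNgt; apply/negP => H; have := Hmin _ H; by rewrite leqNgt Hm.
Qed.

Definition orc (F : seq nat) (s : seq bool) : nset := fun i => i \in F \/ nth false s i.

Lemma lookv_code F s i : lookv F i (code_str s) = ((i \in F) || nth false s i).
Proof.
rewrite /lookv bitv_code -inFv_pos.
case: (inFv i F) => [|k]; case: (nth false s i) => //.
Qed.

Lemma HL_orc F s i : (orc F s i /\ eval empty_set (look_p F) [:: i; code_str s] 1) \/
  (~ orc F s i /\ eval empty_set (look_p F) [:: i; code_str s] 0).
Proof.
have H := look_ok empty_set F i (code_str s) [::]; rewrite lookv_code in H.
case E: ((i \in F) || nth false s i) H => H.
- left; split => //; rewrite /orc; case/orP: E; by [left|right].
- right; split => // [[H1|H1]]; by rewrite H1 ?orbT in E.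
Qed.

Definition main F e := PComp (PComp (Tr (look_p F) e 1) [:: b_p; a_p]) [:: W_p; PProj 0].

Lemma main_ok F e n : (exists y, eval empty_set (main F e) [:: n] y) <->
  exists s x, n = cpair (code_str s) x /\ exists y, eval (orc F s) e [:: x] y.
Proof.
have [w [Hw HW]] := W_ok empty_set n.
have Hb : n - Tv w <= w.
  case/andP: Hw => H1 H2; rewrite TvS in H2; rewrite leq_subLR; by rewrite addnS ltnS in H2.
have En : n = cpair (w - (n - Tv w)) (n - Tv w).
  by rewrite cpairE subnK // subnKC //; case/andP: Hw.
split.
- move=> [y /inv_comp [ws [/inv_cons [w1 [ws1 [-> [HW1 /inv_cons [w2 [ws2 [-> [/inv_proj -> /inv_nil ->]]]]]]]] H]]].
  rewrite -(eval_det _ _ _ _ HW _ HW1) /= in H.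
  move: H => /inv_comp [ws5 [/inv_cons [w3 [ws3 [-> [Hb3 /inv_cons [w4 [ws4 [-> [Ha4 /inv_nil ->]]]]]]]] H]].
  rewrite -(eval_det _ _ _ _ (b_ok _ _ _ _) _ Hb3) -(eval_det _ _ _ _ (a_ok _ _ _ _) _ Ha4) in H.
  have [s Hs] := code_surj (w - (n - Tv w)).
  exists s, (n - Tv w); split; first by rewrite Hs.
  exists y; apply: (Tr_complete (look_p F) (orc F s) (code_str s) (HL_orc F s) e [:: n - Tv w]).
  by rewrite Hs.
- move=> [s [x [En' [y Hy]]]]; exists y; subst n.
  have Ew : w = code_str s + x.
    apply: Tv_unique Hw _; by rewrite cpairE leq_addr andTb TvS ltn_add2l ltnS leq_addl.
  have Eb : cpair (code_str s) x - Tv w = x by rewrite cpairE -Ew addKn.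
  apply: comp2 HW (eProj _ _ _) _.
  apply: comp2 (b_ok _ _ _ _) (a_ok _ _ _ _) _ => /=.
  rewrite Eb Ew addnK.
  exact: (Tr_sound (look_p F) (orc F s) (code_str s) (HL_orc F s) e [:: x] y Hy).
Qed.

Definition Theta (F : seq nat) (e : prog) : operator :=
  fun sx => exists y, eval (orc F sx.1) e [:: sx.2] y.

Lemma Theta_ce F e : rel_ce_operator (Theta F e).
Proof.
exists (main F e) => n; rewrite main_ok; split.
- move=> [s [x [-> H]]]; by exists s, x.
- move=> [s [x [-> H]]]; by exists s, x.
Qed.

Definition uniF (F : seq nat) (S : nset) : nset := fun i => i \in F \/ S i.

Definition good (A : nset) F (C : nset) e := forall S, subset S C -> infinite S ->
  forall x, A x <-> exists y, eval (uniF F S) e [:: x] y.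

Lemma good_apply A F C e : infinite C -> good A F C e ->
  forall S, subset S C -> infinite S -> forall x, apply_op (Theta F e) S x <-> A x.
Proof.
move=> HC Hg S HS HSi x; split.
- move=> [s [Hs [y Hy]]].
  have [u Hu] := use_lemma _ _ _ _ Hy.
  set S' := fun i => (i < size s /\ S i) \/ (C i /\ maxn u (size s) <= i).
  have HS' : subset S' C by move=> i [[_ Si]|[Ci _]]; [exact: HS|].
  have HS'i : infinite S'.
    move=> n; have [m [Hm [Cm Hum]]] := infinite_above _ (maxn u (size s)) HC n.
    exists m; split => //; by right.
  apply/(Hg S' HS' HS'i x); exists y; apply: Hu => i Hi; rewrite /orc /uniF /S'.
  case: (ltnP i (size s)) => Hs'.
  + have := Hs i Hs'; split.
    * case => [->|Hn]; [by left|right; left; split => //; exact/H].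
    * case => [->|[[_ Si]|[_ Hle]]]; [by left|right; exact/H|].
      by rewrite geq_max leqNgt Hi in Hle.
  + rewrite nth_default //; split; first by case => [->|//]; left.
    case => [->|[[Hlt _]|[_ Hle]]]; [by left|by []|].
    by rewrite geq_max leqNgt Hi in Hle.
- move=> /(Hg S HS HSi x) [y Hy].
  have [u Hu] := use_lemma _ _ _ _ Hy.
  exists (mkseq (fun i => bP (S i)) u); split.
  + move=> i; rewrite size_mkseq => Hi; rewrite nth_mkseq //; split => [/bPP //|H]; exact/bPP.
  + exists y; apply: Hu => i Hi; rewrite /orc /uniF nth_mkseq //; split.
    * case => [->|Si]; [by left|right; exact/bPP].
    * case => [->|/bPP Si]; [by left|by right].
Qed.

Definition cond (B : nset) (F : seq nat) (X : nset) :=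
  (forall i, i \in F -> B i) /\ subset X B /\ infinite X.
Definition ext (F : seq nat) (X : nset) (F' : seq nat) (X' : nset) :=
  {subset F <= F'} /\ (forall i, i \in F' -> i \in F \/ X i) /\ subset X' X.
Definition forces (A : nset) e (F : seq nat) (X : nset) := forall S : nset,
  (forall i, i \in F -> S i) -> (forall i, S i -> i \in F \/ X i) -> infinite S ->
  ~ (forall x, A x <-> exists y, eval S e [:: x] y).

Section Key.
Variables (A B : nset) (e : prog) (F : seq nat) (X : nset).
Hypothesis NotConcl : ~ exists (C : nset) (Th : operator),
    subset C B /\ infinite C /\ rel_ce_operator Th /\
    (forall S : nset, subset S C -> infinite S -> forall x, apply_op Th S x <-> A x).
Hypothesis Hcond : cond B F X.

Definition Ox (F0 : seq nat) x : nset -> Prop := fun Z => exists y, eval (uniF F0 Z) e [:: x] y.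
Lemma Ox_open F0 x : openO (Ox F0 x).
Proof.
move=> S [y Hy]; have [u Hu] := use_lemma _ _ _ _ Hy; exists u => T HT; exists y.
apply: Hu => i Hi; rewrite /uniF; have := HT i Hi; tauto.
Qed.
Definition hom F0 x (Y : nset) := (forall Z, subset Z Y -> infinite Z -> Ox F0 x Z) \/
  (forall Z, subset Z Y -> infinite Z -> ~ Ox F0 x Z).
Lemma hom_mono F0 x Y Y' : hom F0 x Y -> subset Y' Y -> hom F0 x Y'.
Proof.
move=> [H|H] HY; [left|right] => Z HZ HZi; apply: H HZi => i Hi; exact: HY (HZ _ Hi).
Qed.
Lemma Ox_ext F0 F1 x Z : F0 =i F1 -> Ox F0 x Z -> Ox F1 x Z.
Proof. move=> E [y Hy]; exists y; apply: eval_ext Hy => i; by rewrite /uniF E. Qed.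
Lemma hom_ext F0 F1 x Y : F0 =i F1 -> hom F0 x Y -> hom F1 x Y.
Proof.
move=> E [H|H]; [left|right] => Z HZ HZi.
- exact: Ox_ext E (H Z HZ HZi).
- move=> HO; apply: (H Z HZ HZi); apply: Ox_ext HO => i; by rewrite E.
Qed.

Lemma hom_list (L : seq (nat * seq nat)) Y : infinite Y ->
  exists Y', subset Y' Y /\ infinite Y' /\ forall q, q \in L -> hom (F ++ q.2) q.1 Y'.
Proof.
elim: L Y => [|q L IH] Y HY; first by exists Y; split => //; split.
have [Y1 [H1 [H2 H3]]] := IH Y HY.
have [Y2 [H4 [H5 H6]]] := nash_williams _ (Ox_open (F ++ q.2) q.1) Y1 H2.
exists Y2; split; first by move=> i Hi; exact: H1 (H4 _ Hi).
split => // q'; rewrite in_cons => /orP [/eqP ->|Hq]; first exact: H6.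
exact: hom_mono (H3 _ Hq) H4.
Qed.

Definition RK (p : seq nat) (Y : nset) :=
  forall x (P : seq nat), x < size p -> {subset P <= p} -> hom (F ++ P) x Y.

Lemma RK_mono p Y Y' : RK p Y -> subset Y' Y -> infinite Y' -> RK p Y'.
Proof. move=> H HY _ x P Hx HP; exact: hom_mono (H x P Hx HP) HY. Qed.
Lemma RK_dense p Y : infinite Y -> exists Y', subset Y' Y /\ infinite Y' /\ RK p Y'.
Proof.
move=> HY.
have [Y' [H1 [H2 H3]]] := hom_list [seq (x, P) | x <- iota 0 (size p), P <- subs p] Y HY.
exists Y'; split => //; split => // x P Hx HP.
have [Q HQ E] := subs_complete p P HP.
have HxQ : (x, Q) \in [seq (x, P) | x <- iota 0 (size p), P <- subs p].
  by apply: (allpairs_f (fun x P => (x, P))) => //; rewrite mem_iota add0n.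
apply: hom_ext (H3 _ HxQ) => i; by rewrite /= !mem_cat E.
Qed.

Lemma key : exists F' X', cond B F' X' /\ ext F X F' X' /\ forces A e F' X'.
Proof.
case: Hcond => HFB [HXB HXi].
have [c [Hc [Xc Dc]]] := fusion RK RK_mono RK_dense X HXi.
set C := tail c 0.
have CX : subset C X by move=> i [j [_ ->]].
have Cinf : infinite C := tail_inf c Hc 0.
have Csplit : forall k i, C i -> i \in mkseq c k \/ tail c k i.
  move=> k i [j [_ ->]]; apply: range_split; by exists j.
have preX : forall k i, i \in mkseq c k -> X i.
  by move=> k i /(mem_pre c) [j [_ ->]].
have tailX : forall k, subset (tail c k) X by move=> k i [j [_ ->]].
case: (classic (exists k x (P : seq nat), x < k /\ {subset P <= mkseq c k} /\ A x /\
          (forall Z, subset Z (tail c k) -> infinite Z -> ~ Ox (F ++ P) x Z))) =>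
  [[k [x [P [Hxk [HP [Ax HN]]]]]]|N1].
  exists (F ++ P), (tail c k); split; last split.
  - split; last split.
    + move=> i; rewrite mem_cat => /orP [Hi|Hi]; [exact: HFB|exact: HXB (preX k i (HP _ Hi))].
    + move=> i Hi; exact: HXB (tailX k i Hi).
    + exact: tail_inf.
  - split; first by move=> i Hi; rewrite mem_cat Hi.
    split; last exact: tailX.
    move=> i; rewrite mem_cat => /orP [Hi|Hi]; [by left|right; exact: preX (HP _ Hi)].
  - move=> S HS1 HS2 HSi HA.
    set Z := fun i => S i /\ tail c k i.
    have HZi : infinite Z by apply: infinite_sub_fin HSi HS2.
    apply: (HN Z (fun i Hi => proj2 Hi) HZi).
    have [y Hy] := (proj1 (HA x) Ax); exists y; apply: eval_ext Hy => i; rewrite /uniF /Z.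
    split; first by move=> Si; case: (HS2 _ Si) => H; [left|right].
    case => [Hi|[Si _]] //; exact: HS1.
case: (classic (exists S x, subset S C /\ infinite S /\ ~ A x /\
          exists y, eval (uniF F S) e [:: x] y)) => [[S [x [HS [HSi [NAx [y Hy]]]]]]|N2].
  have [u Hu] := use_lemma _ _ _ _ Hy.
  set G := [seq i <- iota 0 u | bP (S i)].
  have GS : forall i, i \in G -> S i /\ i < u.
    move=> i; rewrite mem_filter mem_iota add0n => /andP [/bPP Si Hi]; by [].
  exists (F ++ G), (fun i => C i /\ u <= i); split; last split.
  - split; last split.
    + move=> i; rewrite mem_cat => /orP [Hi|/GS [Si _]]; [exact: HFB|exact: HXB (CX _ (HS _ Si))].
    + move=> i [Ci _]; exact: HXB (CX _ Ci).
    + exact: infinite_above.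
  - split; first by move=> i Hi; rewrite mem_cat Hi.
    split; last by move=> i [Ci _]; exact: CX.
    move=> i; rewrite mem_cat => /orP [Hi|/GS [Si _]]; [by left|right; exact: CX (HS _ Si)].
  - move=> S' HS1 HS2 HSi' HA; apply: NAx; apply/HA; exists y; apply: Hu => i Hi; split.
    + case => [HiF|Si]; apply: HS1; rewrite mem_cat ?HiF //.
      apply/orP; right; rewrite mem_filter; apply/andP; split; [exact/bPP|by rewrite mem_iota add0n Hi].
    + move=> /HS2 [|[_ Hle]]; last by rewrite leqNgt Hi in Hle.
      rewrite mem_cat => /orP [HiF|/GS [Si _]]; [by left|by right].
exfalso; apply: NotConcl; exists C, (Theta F e); split.
  move=> i Ci; exact: HXB (CX _ Ci).
split => //; split; first exact: Theta_ce.
apply: good_apply => // S HS HSi x; split; last first.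
  move=> [y Hy]; apply: NNPP => NAx; apply: N2; by exists S, x; split => //; split => //; split => //; exists y.
move=> Ax.
set k := x.+1.
set P := [seq i <- mkseq c k | bP (S i)].
set Z := fun i => S i /\ tail c k i.
have HP : {subset P <= mkseq c k} by move=> i; rewrite mem_filter => /andP [].
have HZi : infinite Z.
  apply: infinite_sub_fin HSi _ => i Si; exact: Csplit (HS _ Si).
have Hx : x < size (mkseq c k) by rewrite size_mkseq.
case: (Dc k x P Hx HP) => Hh.
- have [y Hy] := Hh Z (fun i Hi => proj2 Hi) HZi; exists y; apply: eval_ext Hy => i.
  rewrite /uniF mem_cat; split.
  + case => [/orP [Hi|Hi]|[Si _]]; [by left|right|by right].
    move: Hi; rewrite mem_filter => /andP [/bPP //].
  + case => [Hi|Si]; first by left; rewrite Hi.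
    case: (Csplit k i (HS _ Si)) => Hi; [left; apply/orP; right|by right].
    rewrite mem_filter Hi andbT; exact/bPP.
- exfalso; apply: N1; exists k, x, P; split => //; split => //.
Qed.
End Key.

(* countability of programs *)
Fixpoint enc (p : prog) : GenTree.tree nat :=
  match p with
  | PZero => GenTree.Node 0 [::]
  | PSucc => GenTree.Node 1 [::]
  | PProj i => GenTree.Node 2 [:: GenTree.Leaf i]
  | POracle => GenTree.Node 3 [::]
  | PComp f gs => GenTree.Node 4 (enc f :: map enc gs)
  | PPrec f g => GenTree.Node 5 [:: enc f; enc g]
  | PMu f => GenTree.Node 6 [:: enc f]
  end.

Fixpoint dec (t : GenTree.tree nat) : option prog :=
  match t with
  | GenTree.Leaf _ => None
  | GenTree.Node n ts =>
    let fix decs (l : seq (GenTree.tree nat)) : option (seq prog) :=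
      match l with
      | [::] => Some [::]
      | t :: l' => match dec t, decs l' with Some p, Some ps => Some (p :: ps) | _, _ => None end
      end in
    match n, ts with
    | 0, _ => Some PZero
    | 1, _ => Some PSucc
    | 2, [:: GenTree.Leaf i] => Some (PProj i)
    | 3, _ => Some POracle
    | 4, tf :: tgs => match dec tf, decs tgs with Some f, Some gs => Some (PComp f gs) | _, _ => None end
    | 5, [:: tf; tg] => match dec tf, dec tg with Some f, Some g => Some (PPrec f g) | _, _ => None end
    | 6, [:: tf] => match dec tf with Some f => Some (PMu f) | None => None end
    | _, _ => None
    end
  end.

Lemma encK : forall p, dec (enc p) = Some p.
Proof.
apply: prog_ind' => //=.
- move=> f gs -> Hgs.
  suff -> : (fix decs (l : seq (GenTree.tree nat)) : option (seq prog) :=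
      match l with
      | [::] => Some [::]
      | t :: l' => match dec t, decs l' with Some p, Some ps => Some (p :: ps) | _, _ => None end
      end) (map enc gs) = Some gs by [].
  elim: gs Hgs => //= g gs IH Hgs; rewrite (Hgs g (or_introl erefl)) IH //.
  move=> g' H; exact: Hgs g' (or_intror H).
- by move=> f g -> ->.
- by move=> f ->.
Qed.

Definition en (k : nat) : prog :=
  if unpickle k is Some t then odflt PZero (dec t) else PZero.
Lemma en_surj p : en (pickle (enc p)) = p.
Proof. by rewrite /en pickleK encK. Qed.

Lemma ext_refl F X : ext F X F X.
Proof. split => //; split => // i Hi; by left. Qed.
Lemma ext_trans F X F1 X1 F2 X2 : ext F X F1 X1 -> ext F1 X1 F2 X2 -> ext F X F2 X2.
Proof.
move=> [H1 [H2 H3]] [H4 [H5 H6]]; split; first by move=> i Hi; apply: H4; apply: H1.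
split; last by move=> i Hi; apply: H3; apply: H6.
move=> i Hi; case: (H5 _ Hi) => [/H2 //|Xi]; right; exact: H3.
Qed.
Lemma forces_ext A e F X F' X' : forces A e F X -> ext F X F' X' -> forces A e F' X'.
Proof.
move=> H [H1 [H2 H3]] S HS1 HS2 HSi; apply: H HSi.
- move=> i Hi; apply: HS1; exact: H1.
- move=> i Si; case: (HS2 _ Si) => [/H2 //|Xi]; right; exact: H3.
Qed.

Section Gen.
Variables A B : nset.
Hypothesis HB : infinite B.
Hypothesis Hce : forall S : nset, subset S B -> infinite S -> ce_in S A.
Hypothesis NotConcl : ~ exists (C : nset) (Th : operator),
    subset C B /\ infinite C /\ rel_ce_operator Th /\
    (forall S : nset, subset S C -> infinite S -> forall x, apply_op Th S x <-> A x).

Definition Pstep k (q q' : seq nat * nset) :=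
  cond B q'.1 q'.2 /\ ext q.1 q.2 q'.1 q'.2 /\ forces A (en k) q'.1 q'.2 /\ exists m, k <= m /\ m \in q'.1.

Lemma step_ex k q : cond B q.1 q.2 -> exists q', Pstep k q q'.
Proof.
move=> Hc; have [F1 [X1 [Hc1 [He1 Hf1]]]] := key A B (en k) q.1 q.2 NotConcl Hc.
case: Hc1 => HF1 [HX1 HX1i].
have [m [Hkm Xm]] := HX1i k.
exists (m :: F1, X1); split; last split; last split.
- split => //= i; rewrite in_cons => /orP [/eqP ->|]; [exact: HX1|exact: HF1].
- apply: ext_trans He1 _; split; first by move=> i Hi; rewrite in_cons Hi orbT.
  split => // i; rewrite in_cons => /orP [/eqP ->|Hi]; [by right|by left].
- apply: forces_ext Hf1 _; split; first by move=> i Hi; rewrite in_cons Hi orbT.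
  split => // i; rewrite in_cons => /orP [/eqP ->|Hi]; [by right|by left].
- exists m; split => //; exact: mem_head.
Qed.

Fixpoint st k : seq nat * nset :=
  if k is k'.+1 then epsilon (inhabits (st k')) (Pstep k' (st k')) else ([::], B).

Lemma st_cond k : cond B (st k).1 (st k).2.
Proof.
elim: k => [|k IH]; first by split => //; split.
have H := step_ex k (st k) IH.
by have [? _] := epsilon_spec (inhabits (st k)) (Pstep k (st k)) H.
Qed.
Lemma st_step k : Pstep k (st k) (st k.+1).
Proof. exact: epsilon_spec (step_ex k (st k) (st_cond k)). Qed.
Lemma st_chain j d : ext (st j).1 (st j).2 (st (j + d)).1 (st (j + d)).2.
Proof.
elim: d => [|d IH]; first by rewrite addn0; exact: ext_refl.
rewrite addnS; apply: ext_trans IH _; by case: (st_step (j + d)) => _ [].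
Qed.

Definition Sgen : nset := fun i => exists k, i \in (st k).1.

Lemma gen_contra : False.
Proof.
have SB : subset Sgen B.
  move=> i [k Hk]; by case: (st_cond k) => H _; exact: H.
have Sinf : infinite Sgen.
  move=> n; case: (st_step n) => _ [_ [_ [m [Hm Hin]]]]; exists m; split => //; by exists n.+1.
have [e He] := Hce Sgen SB Sinf.
set k := pickle (enc e).
case: (st_step k) => _ [_ [Hf _]]; rewrite en_surj in Hf.
apply: (Hf Sgen) => //.
- move=> i Hi; by exists k.+1.
- move=> i [m Hm]; case: (leqP m k.+1) => Hmk.
  + left; have [H _] := st_chain m (k.+1 - m); rewrite subnKC // in H; exact: H.
  + have [_ [H _]] := st_chain k.+1 (m - k.+1); rewrite subnKC ?(ltnW Hmk) // in H.
    exact: H.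
Qed.
End Gen.

Theorem proposition3p7 (A B : nset) :
  infinite B ->
  (forall S : nset, subset S B -> infinite S -> ce_in S A) ->
  exists (C : nset) (Theta : operator),
    subset C B /\ infinite C /\ rel_ce_operator Theta /\
    (forall S : nset, subset S C -> infinite S ->
       forall x, apply_op Theta S x <-> A x).
Proof.
move=> HB Hce; apply: NNPP => N; exact: (gen_contra A B HB Hce N).
Qed.
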